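(* Let $\overline{G}$ be the roommate diversity game described in the context. If an outcome $\pi$ of $\overline{G}$ satisfies $|D_\pi^n|=1$ and $|D_\pi^-|=1$, then $\pi$ is a top-type outcome.
   Context: In a roommate diversity game with agent set $N=R\cup B$ ($R$ red, $B$ blue) and room size $s$, an outcome is a partition of $N$ into rooms of size $s$; $\pi(a)$ is the room containing $a$ and $\theta(C)=|C\cap R|/|C|$. Each agent $a$ has a trichotomous preference given by a partition of the fractions into sets $D_a^+$ (approved), $D_a^n$ (neutral), $D_a^-$ (disapproved), possibly empty, with approved $\succ$ neutral $\succ$ disapproved and indifference within each set. For an outcome $\pi$, $D_\pi^+=\{a:\theta(\pi(a))\in D_a^+\}$, and $D_\pi^n$, $D_\pi^-$ are defined analogously. The game $\overline{G}$: $R=\{r_1,r_2,r_3\}$, $B=\{b_1,\dots,b_6\}$, $s=3$; $r_1$: $D^+=\{1/3\}$, $D^-=\{2/3,1\}$; $r_2,r_3$: $D^+=\{2/3\}$, $D^-=\{1/3,1\}$; $b_1,\dots,b_4$: $D^+=\{1/3\}$, $D^n=\{2/3\}$, $D^-=\{0\}$; $b_5,b_6$: $D^+=\{0\}$, $D^-=\{1/3,2/3\}$ (a red agent is never in a room of fraction $0$, a blue agent never in one of fraction $1$). An outcome is top-type if it equals $\{\{r_1,\hat b_1,\hat b_2\},\{r_2,r_3,\hat b_3\},\{b_5,b_6,\hat b_4\}\}$ for some enumeration $\hat b_1,\hat b_2,\hat b_3,\hat b_4$ of $\{b_1,b_2,b_3,b_4\}$. *)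

(* Defs.v *)
From mathcomp Require Import all_boot all_order all_algebra all_fingroup.
Set Implicit Arguments. Unset Strict Implicit. Unset Printing Implicit Defensive.
Import Order.TTheory GRing.Theory Num.Theory.

(* Agents of the game Gbar: 'I_9.  Indices 0,1,2 are r1,r2,r3;
   indices 3..8 are b1..b6. *)
Definition agent := 'I_9.
Definition r1 : agent := inord 0.
Definition r2 : agent := inord 1.
Definition r3 : agent := inord 2.
Definition b (j : nat) : agent := inord (j + 2).

Definition Red : {set agent} := [set r1; r2; r3].
Definition Blue : {set agent} := ~: Red.

Definition s : nat := 3.

Definition outcome (P : {set {set agent}}) : Prop :=
  partition P [set: agent] /\ forall C, C \in P -> #|C| = s.

Definition theta (C : {set agent}) : rat :=
  ((#|C :&: Red|)%:R / (#|C|)%:R)%R.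

(* trichotomous preferences: approved / neutral / disapproved fractions *)
Definition Dplus (a : agent) : seq rat :=
  if a == r1 then [:: (1/3)%R]
  else if (a == r2) || (a == r3) then [:: (2/3)%R]
  else if a \in [set b 1; b 2; b 3; b 4] then [:: (1/3)%R]
  else [:: 0%R].
Definition Dneut (a : agent) : seq rat :=
  if a \in [set b 1; b 2; b 3; b 4] then [:: (2/3)%R] else [::].
Definition Dminus (a : agent) : seq rat :=
  if a == r1 then [:: (2/3)%R; 1%R]
  else if (a == r2) || (a == r3) then [:: (1/3)%R; 1%R]
  else if a \in [set b 1; b 2; b 3; b 4] then [:: 0%R]
  else [:: (1/3)%R; (2/3)%R].

Definition room (P : {set {set agent}}) (a : agent) := pblock P a.

Definition Dpi_plus (P : {set {set agent}}) : {set agent} :=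
  [set a | theta (room P a) \in Dplus a].
Definition Dpi_n (P : {set {set agent}}) : {set agent} :=
  [set a | theta (room P a) \in Dneut a].
Definition Dpi_minus (P : {set {set agent}}) : {set agent} :=
  [set a | theta (room P a) \in Dminus a].

(* top-type outcomes: {{r1,^b1,^b2},{r2,r3,^b3},{b5,b6,^b4}} for some
   enumeration ^b1..^b4 of {b1..b4}; the enumeration is b (1 + sg i) for
   a permutation sg of 'I_4. *)
Definition top_type (P : {set {set agent}}) : Prop :=
  exists sg : {perm 'I_4},
    let bh (i : nat) := b (1 + sg (inord i)) in
    P = [set [set r1; bh 0; bh 1]; [set r2; r3; bh 2]; [set b 5; b 6; bh 3]].

(* Main.v *)
Require Import Defs.
From mathcomp Require Import all_boot all_order all_algebra all_fingroup.
From mathcomp Require Import zify.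

Definition lab (l : seq nat) k := nth 0 l k.
Definition sameb l a x := lab l x == lab l a.
Definition cred l a := (sameb l a 0 : nat) + sameb l a 1 + sameb l a 2.
Definition dnb (a c : nat) : bool := (3 <= a <= 6) && (c == 2).
Definition dmb (a c : nat) : bool :=
  if a == 0 then (c == 2) || (c == 3)
  else if a <= 2 then (c == 1) || (c == 3)
  else if a <= 6 then c == 0 else (c == 1) || (c == 2).
Definition hyp l :=
  [&& all (fun a => count (sameb l a) (iota 0 9) == 3) (iota 0 9),
      count (fun a => dnb a (cred l a)) (iota 0 9) == 1 &
      count (fun a => dmb a (cred l a)) (iota 0 9) == 1].
Definition concl l :=
  [&& lab l 0 != lab l 1, lab l 0 != lab l 7, lab l 1 != lab l 7,
      sameb l 1 2, sameb l 7 8 &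
      has (fun i => has (fun j => [&& i != j, lab l (3 + i) == lab l 1,
               lab l (3 + j) == lab l 7 &
               all (fun k => [|| k == i, k == j | lab l (3 + k) == lab l 0]) (iota 0 4)])
        (iota 0 4)) (iota 0 4)].
Fixpoint gen n : seq (seq nat) :=
  if n is n'.+1 then flatten [seq [seq x :: s | s <- gen n'] | x <- [:: 0; 1; 2]]
  else [:: [::]].
Lemma brute : all (fun l => hyp l ==> concl l) (gen 9).
Proof. vm_compute. reflexivity. Qed.

Lemma gen_mem l : all (fun x => x < 3) l -> l \in gen (size l).
Proof.
elim: l => [|x l IH] //= /andP [hx hl].
have H := IH hl.
case: x hx => [|[|[|x]]] // _; rewrite /= !mem_cat.
- by rewrite (map_f (fun s => 0 :: s) H).
- by rewrite (map_f (fun s => 1 :: s) H) orbT.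
- by rewrite (map_f (fun s => 2 :: s) H) !orbT.
Qed.

Lemma card_count (A : {set agent}) : #|A| = count (fun k => inord k \in A) (iota 0 9).
Proof.
rewrite cardE -val_enum_ord count_map /enum_mem size_filter.
rewrite /enum_mem filter_predT; apply: eq_count => x /=; by rewrite inord_val.
Qed.

Lemma valr1 : nat_of_ord r1 = 0. Proof. by rewrite /r1 /= inordK. Qed.
Lemma valr2 : nat_of_ord r2 = 1. Proof. by rewrite /r2 /= inordK. Qed.
Lemma valr3 : nat_of_ord r3 = 2. Proof. by rewrite /r3 /= inordK. Qed.
Lemma valb j : j <= 6 -> nat_of_ord (b j) = j + 2.
Proof. by move=> h; rewrite /b /= inordK //; lia. Qed.

Lemma eqr1 (a : agent) : (a == r1) = (nat_of_ord a == 0).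
Proof. by rewrite -val_eqE /= valr1. Qed.
Lemma eqr2 (a : agent) : (a == r2) = (nat_of_ord a == 1).
Proof. by rewrite -val_eqE /= valr2. Qed.
Lemma eqr3 (a : agent) : (a == r3) = (nat_of_ord a == 2).
Proof. by rewrite -val_eqE /= valr3. Qed.

Lemma inRed (a : agent) : (a \in Red) = (nat_of_ord a < 3).
Proof.
rewrite /Red !inE eqr1 eqr2 eqr3.
by case: a => -[|[|[|[|[|[|[|[|[|?]]]]]]]]].
Qed.

Lemma inB14 (a : agent) : (a \in [set b 1; b 2; b 3; b 4]) = (3 <= nat_of_ord a <= 6).
Proof.
rewrite !inE -!val_eqE /= !valb //=.
by case: a => -[|[|[|[|[|[|[|[|[|?]]]]]]]]].
Qed.

Lemma neutE (a : agent) c : c <= 3 ->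
  ((c%:R / 3%:R : rat) \in Dneut a) = dnb (nat_of_ord a) c.
Proof.
rewrite /Dneut inB14 /dnb; case: (3 <= nat_of_ord a <= 6) => /=.
  by case: c => [|[|[|[|c]]]] //= _; vm_compute.
by rewrite ?in_nil.
Qed.

Lemma minusE (a : agent) c : c <= 3 ->
  ((c%:R / 3%:R : rat) \in Dminus a) = dmb (nat_of_ord a) c.
Proof.
rewrite /Dminus eqr1 eqr2 eqr3 inB14 /dmb.
case: a => k hk /=.
by case: k hk => [|[|[|[|[|[|[|[|[|?]]]]]]]]] //= _;
   case: c => [|[|[|[|c]]]] //= _; vm_compute.
Qed.

Lemma perm_ex (i j : 'I_4) : i != j ->
  exists sg : {perm 'I_4}, sg (inord 2) = i /\ sg (inord 3) = j.
Proof.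
move=> hij.
pose s1 := tperm (inord 2 : 'I_4) i.
pose j' := s1 j.
pose s2 := tperm (inord 3 : 'I_4) j'.
exists (s2 * s1)%g; rewrite !permM.
have h23 : (inord 3 : 'I_4) != inord 2 by rewrite -val_eqE /= /= !inordK.
have hj' : j' != inord 2.
  apply/eqP => e; move/eqP: hij; apply; rewrite -[j](tpermK (inord 2 : 'I_4) i).
  by rewrite -/s1 -/j' e /s1 tpermL.
split.
  by rewrite /s2 (tpermD h23 hj') /s1 tpermL.
by rewrite /s2 tpermL /j' /s1 tpermK.
Qed.

Lemma card3 (x y z : agent) : x != y -> x != z -> y != z -> #|[set x; y; z]| = 3.
Proof.
move=> hxy hxz hyz.
rewrite -setUA cardsU1 cardsU1 cards1 !inE.
by rewrite (negbTE hxy) (negbTE hxz) (negbTE hyz).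
Qed.

Theorem mainTheorem7 (P : {set {set agent}}) :
  outcome P -> #|Dpi_n P| = 1 -> #|Dpi_minus P| = 1 -> top_type P.
Proof.
move=> [hpart hsz] hN hM.
have hpart' := hpart.
case/and3P: hpart => /eqP hcov htriv h0.
have incov a : a \in cover P by rewrite hcov inE.
pose R := pblock P.
have RP a : R a \in P := pblock_mem (incov a).
have Ra a : a \in R a by rewrite mem_pblock.
have R3 a : #|R a| = 3 := hsz _ (RP a).
have Req x a : x \in R a -> R x = R a := fun h => same_pblock htriv h.
have cardP : #|P| = 3.
  have := card_uniform_partition hsz hpart'.
  rewrite cardsT card_ord /s; lia.
pose e := enum P.
have se : size e = 3 by rewrite -cardE.
pose t a := index (R a) e.
have tlt a : t a < 3 by rewrite -se index_mem mem_enum.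
have memt x a : (x \in R a) = (t x == t a).
  apply/idP/eqP => [h|h]; first by rewrite /t (Req _ _ h).
  have -> : R a = R x.
    by apply: (index_inj set0 (s := e)); rewrite ?mem_enum.
  exact: Ra.
pose l := [seq t (inord k : agent) | k <- iota 0 9].
have labE k : k < 9 -> lab l k = t (inord k).
  by move=> hk; rewrite /lab (nth_map 0) ?size_iota // nth_iota.
have labA (a : agent) : lab l (nat_of_ord a) = t a.
  by rewrite labE ?ltn_ord // (_ : inord (nat_of_ord a) = a) //; apply: inord_val.
have credE (a : agent) : #|R a :&: Red| = cred l (nat_of_ord a).
  rewrite card_count.
  rewrite (@eq_in_count _ _ (fun k => (inord k \in R a) && (k < 3))); last first.
    move=> k; rewrite mem_iota => /andP [_ hk].
    by rewrite in_setI inRed inordK.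
  rewrite /= !andbT !andbF !addn0 /cred /sameb labA !labE //.
  by rewrite !memt addnA.
have cle (a : agent) : #|R a :&: Red| <= 3.
  by rewrite (leq_trans (subset_leq_card (subsetIl (R a) Red))) ?R3.
have thetaE (a : agent) : theta (R a) = ((#|R a :&: Red|)%:R / 3%:R)%R.
  by rewrite /theta R3.
have hyp_l : hyp l.
  apply/and3P; split.
  - apply/allP => a; rewrite mem_iota => /andP [_ ha].
    apply/eqP; transitivity #|R (inord a)|; last exact: R3.
    rewrite card_count; apply: eq_in_count => k; rewrite mem_iota => /andP [_ hk].
    by rewrite memt /sameb !labE.
  - apply/eqP; transitivity #|Dpi_n P|; last exact: hN.
    rewrite card_count; apply: eq_in_count => k.
    rewrite mem_iota => /andP [_ hk]; symmetry.
    rewrite inE /room -/R thetaE neutE // credE.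
    by rewrite inordK.
  - apply/eqP; transitivity #|Dpi_minus P|; last exact: hM.
    rewrite card_count; apply: eq_in_count => k.
    rewrite mem_iota => /andP [_ hk]; symmetry.
    rewrite inE /room -/R thetaE minusE // credE.
    by rewrite inordK.
have lgen : l \in gen 9.
  have -> : 9 = size l by rewrite size_map size_iota.
  apply: gen_mem; apply/allP => x /mapP [k _ ->]; exact: tlt.
have := allP brute l lgen; rewrite hyp_l /= /concl.
case/and5P => d01 d07 d17 s12 /andP [s78 /hasP [i]]; rewrite mem_iota => /andP [_ hi].
case/hasP => j; rewrite mem_iota => /andP [_ hj].
case/and4P => hij hi1 hj7 /allP hall.
rewrite /sameb in s12 s78.
rewrite !labE // in d01 d07 d17 s12 s78 hi1 hj7; try lia.
have [sg [sg2 sg3]] := perm_ex (inord i : 'I_4) (inord j : 'I_4)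
  ltac:(by rewrite -val_eqE /= /= !inordK).
exists sg; cbv zeta.
pose bh k := b (1 + sg (inord k)).
have valbh k : nat_of_ord (bh k) = 3 + nat_of_ord (sg (inord k)).
  rewrite /bh valb; last by have := ltn_ord (sg (inord k)); lia.
  lia.
have tbh k : t (bh k) = lab l (3 + nat_of_ord (sg (inord k))).
  by rewrite -labA valbh.
have sgne k : k < 2 -> (nat_of_ord (sg (inord k)) != i) && (nat_of_ord (sg (inord k)) != j).
  move=> hk.
  have ne2 : (inord k : 'I_4) != inord 2 by rewrite -val_eqE /= /= !inordK //; lia.
  have ne3 : (inord k : 'I_4) != inord 3 by rewrite -val_eqE /= /= !inordK //; lia.
  apply/andP; split; apply/eqP => e1.
    move/eqP: ne2; apply; apply: (@perm_inj _ sg); apply: val_inj.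
    by rewrite sg2 /= e1 inordK.
  move/eqP: ne3; apply; apply: (@perm_inj _ sg); apply: val_inj.
  by rewrite sg3 /= e1 inordK.
have tbh01 k : k < 2 -> t (bh k) = t r1.
  move=> hk; rewrite tbh.
  have := hall (nat_of_ord (sg (inord k))); rewrite mem_iota ltn_ord => /(_ isT).
  case/andP: (sgne k hk) => /negbTE -> /negbTE -> /= /eqP ->.
  by [].
have tbh2 : t (bh 2) = t r2.
  rewrite tbh sg2 inordK // labE; [exact: (eqP hi1)| lia].
have tbh3 : t (bh 3) = t (b 5).
  rewrite tbh sg3 inordK // labE; [exact: (eqP hj7)| lia].
have bhne k k' : k < 2 -> k' < 2 -> k != k' -> bh k != bh k'.
  move=> hk hk' hkk; apply/eqP => e1.
  have e3 : (inord k : 'I_4) = inord k'.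
    apply: (@perm_inj _ sg); apply: val_inj => /=.
    have := congr1 (@nat_of_ord 9) e1; rewrite !valbh; lia.
  have := congr1 (@nat_of_ord 4) e3; rewrite !inordK; [by move/eqP; rewrite (negbTE hkk) | lia | lia].
have hR1 : R r1 = [set r1; bh 0; bh 1].
  apply/eqP; rewrite eq_sym eqEcard; apply/andP; split.
    apply/subsetP => x; rewrite !inE -orbA => /or3P [] /eqP ->; rewrite ?Ra // memt.
      by rewrite tbh01.
    by rewrite tbh01.
  rewrite R3 card3 //.
  - by rewrite -val_eqE /= valbh valr1.
  - by rewrite -val_eqE /= valbh valr1.
  - by apply: bhne.
have hR2 : R r2 = [set r2; r3; bh 2].
  apply/eqP; rewrite eq_sym eqEcard; apply/andP; split.
    apply/subsetP => x; rewrite !inE -orbA => /or3P [] /eqP ->; rewrite ?Ra // memt.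
      by rewrite (eqP s12).
    by rewrite tbh2.
  rewrite R3 card3 //.
  - by rewrite -val_eqE /= valr2 valr3.
  - by rewrite -val_eqE /= valbh valr2.
  - by rewrite -val_eqE /= valbh valr3.
have hR5 : R (b 5) = [set b 5; b 6; bh 3].
  apply/eqP; rewrite eq_sym eqEcard; apply/andP; split.
    apply/subsetP => x; rewrite !inE -orbA => /or3P [] /eqP ->; rewrite ?Ra // memt.
      by rewrite (eqP s78).
    by rewrite tbh3.
  rewrite R3 card3 //.
  - by rewrite -val_eqE /= !valb.
  - rewrite -val_eqE /= valbh valb //; have := ltn_ord (sg (inord 3)); lia.
  - rewrite -val_eqE /= valbh valb //; have := ltn_ord (sg (inord 3)); lia.
have hP : P = [set R r1; R r2; R (b 5)].
  apply/setP => C; rewrite !inE; apply/idP/idP.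
    move=> hC.
    have : 0 < #|C| by rewrite (hsz _ hC).
    case/card_gt0P => x hx.
    rewrite -(def_pblock htriv hC hx) -/R.
    have tx := tlt x; have t1 := tlt (inord 0); have t2 := tlt (inord 1).
    have t5 := tlt (inord 7).
    have : (t x == t r1) || (t x == t r2) || (t x == t (b 5)).
      change ((t x == t (inord 0)) || (t x == t (inord 1)) || (t x == t (inord 7))).
      move: d01 d07 d17; lia.
    rewrite -orbA; case/or3P => /eqP e1; rewrite -orbA; apply/or3P.
    - by apply: Or31; apply/eqP; apply: Req; rewrite memt e1.
    - by apply: Or32; apply/eqP; apply: Req; rewrite memt e1.
    - by apply: Or33; apply/eqP; apply: Req; rewrite memt e1.
  by rewrite -orbA; case/or3P => /eqP ->; apply: RP.
rewrite hP hR1 hR2 hR5.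
done.
Qed.
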